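(* Let $T$ and $\Sigma$ be sets with $t\in T$ and $p\in\Sigma$. There is no GKAT expression $e$ over $(\Sigma,T)$ such that for every set $S$, every $\tau:T\to2^S$ and every $\sigma$ assigning to each action a partial function $S\rightharpoonup S$, we have $[\![e]\!]^\sigma_\tau=F^\sigma_\tau$.
   Context: Tests $\mathsf{BA}$: $b::=\mathsf{false}\mid\mathsf{true}\mid t\in T\mid b\ \mathsf{or}\ c\mid b\ \mathsf{and}\ c\mid\mathsf{not}\ b$, interpreted via $\tau:T\to2^S$ as subsets $[\![b]\!]_\tau\subseteq S$ in the obvious Boolean way. GKAT expressions: $e::=\mathsf{assert}\ b\mid p\in\Sigma\mid e;f\mid\mathsf{if}\ b\ \mathsf{then}\ e\ \mathsf{else}\ f\mid\mathsf{while}\ b\ \mathsf{do}\ e$. Given $\tau$ and $\sigma:\Sigma\to(S\rightharpoonup S)$, $[\![e]\!]^\sigma_\tau:S\rightharpoonup S$ is: $[\![\mathsf{assert}\ b]\!](s)=s$ if $s\in[\![b]\!]_\tau$ (undefined otherwise); $[\![p]\!]=\sigma(p)$; $[\![e;f]\!](s)=[\![f]\!]([\![e]\!](s))$; $[\![\mathsf{if}\ b\ \mathsf{then}\ e\ \mathsf{else}\ f]\!](s)=[\![e]\!](s)$ if $s\in[\![b]\!]_\tau$, else $[\![f]\!](s)$; $[\![\mathsf{while}\ b\ \mathsf{do}\ e]\!]$ is the least (w.r.t. extension of partial functions) $g$ with $g(s)=g([\![e]\!](s))$ if $s\in[\![b]\!]_\tau$ and $g(s)=s$ otherwise. The program $F$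 (''repeat $p$ while $t$ changes''): given $S,\tau,\sigma$, let $(u,v)$ be the least pair of partial functions $S\rightharpoonup S$ satisfying $u(s)=s$ if $s\notin\tau(t)$, $u(s)=v(\sigma(p)(s))$ if $s\in\tau(t)$; $v(s)=s$ if $s\in\tau(t)$, $v(s)=u(\sigma(p)(s))$ if $s\notin\tau(t)$. Then $F^\sigma_\tau(s)=v(\sigma(p)(s))$ if $s\in\tau(t)$ and $F^\sigma_\tau(s)=u(\sigma(p)(s))$ otherwise (undefined wherever the right-hand side is). *)

(* Defs.v *)
(* A partial function S ⇀ S is represented either as S -> option S (for the
   primitive actions sigma p) or, for derived meanings, as its graph
   S -> S -> Prop (graph relation: f s = Some r  <->  R s r).  Least fixed
   points (while loops, the pair (u,v) of F) are inductive predicates, i.e.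
   the least relations closed under the defining equations. *)

Set Implicit Arguments.

Inductive BExp (T : Type) : Type :=
| BFalse : BExp T
| BTrue : BExp T
| BPrim : T -> BExp T
| BOr : BExp T -> BExp T -> BExp T
| BAnd : BExp T -> BExp T -> BExp T
| BNot : BExp T -> BExp T.

Arguments BFalse {T}.
Arguments BTrue {T}.

Fixpoint bsem (T S : Type) (tau : T -> S -> Prop) (b : BExp T) (s : S) : Prop :=
  match b with
  | BFalse => False
  | BTrue => True
  | BPrim t => tau t s
  | BOr b c => bsem tau b s \/ bsem tau c s
  | BAnd b c => bsem tau b s /\ bsem tau c s
  | BNot b => ~ bsem tau b s
  end.

Inductive GExp (Sigma T : Type) : Type :=
| GAssert : BExp T -> GExp Sigma T
| GAct : Sigma -> GExp Sigma T
| GSeq : GExp Sigma T -> GExp Sigma T -> GExp Sigma T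
| GIf : BExp T -> GExp Sigma T -> GExp Sigma T -> GExp Sigma T
| GWhile : BExp T -> GExp Sigma T -> GExp Sigma T.

(* [[e]]^sigma_tau as the graph of a partial function:  gsem e s r  iff
   [[e]](s) is defined and equals r. *)
Inductive gsem (Sigma T S : Type) (tau : T -> S -> Prop)
    (sigma : Sigma -> S -> option S) : GExp Sigma T -> S -> S -> Prop :=
| gsem_assert : forall b s, bsem tau b s -> gsem tau sigma (GAssert Sigma b) s s
| gsem_act : forall p s r, sigma p s = Some r -> gsem tau sigma (GAct T p) s r
| gsem_seq : forall e f s m r,
    gsem tau sigma e s m -> gsem tau sigma f m r -> gsem tau sigma (GSeq e f) s r
| gsem_if_t : forall b e f s r,
    bsem tau b s -> gsem tau sigma e s r -> gsem tau sigma (GIf b e f) s r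
| gsem_if_f : forall b e f s r,
    ~ bsem tau b s -> gsem tau sigma f s r -> gsem tau sigma (GIf b e f) s r
| gsem_while_done : forall b e s,
    ~ bsem tau b s -> gsem tau sigma (GWhile b e) s s
| gsem_while_step : forall b e s m r,
    bsem tau b s -> gsem tau sigma e s m -> gsem tau sigma (GWhile b e) m r ->
    gsem tau sigma (GWhile b e) s r.

Inductive Frel_u (Sigma T S : Type) (tau : T -> S -> Prop)
    (sigma : Sigma -> S -> option S) (t : T) (p : Sigma) : S -> S -> Prop :=
| Fu_out : forall s, ~ tau t s -> Frel_u tau sigma t p s s
| Fu_in : forall s s' r, tau t s -> sigma p s = Some s' ->
    Frel_v tau sigma t p s' r -> Frel_u tau sigma t p s r
with Frel_v (Sigma T S : Type) (tau : T -> S -> Prop)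
    (sigma : Sigma -> S -> option S) (t : T) (p : Sigma) : S -> S -> Prop :=
| Fv_in : forall s, tau t s -> Frel_v tau sigma t p s s
| Fv_out : forall s s' r, ~ tau t s -> sigma p s = Some s' ->
    Frel_u tau sigma t p s' r -> Frel_v tau sigma t p s r.

(* F^sigma_tau ("repeat p while t changes") as the graph of a partial function. *)
Definition Fsem (Sigma T S : Type) (tau : T -> S -> Prop)
    (sigma : Sigma -> S -> option S) (t : T) (p : Sigma) (s r : S) : Prop :=
  (tau t s -> exists s', sigma p s = Some s' /\ Frel_v tau sigma t p s' r) /\
  (~ tau t s -> exists s', sigma p s = Some s' /\ Frel_u tau sigma t p s' r).

(* Main.v *)
Require Import Defs.
From Stdlib Require Import Arith Lia Classical.

Section Proof.
Variables (Sigma T : Type).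

Definition tauW (W : nat -> bool) : T -> nat -> Prop := fun _ n => W n = true.
Definition sig : Sigma -> nat -> option nat := fun _ n => Some (S n).
Definition G (e : GExp Sigma T) W i r := gsem (tauW W) sig e i r.

Lemma bsem_ext : forall c W n W' n', W n = W' n' ->
  bsem (tauW W) c n -> bsem (tauW W') c n'.
Proof.
  assert (forall c W n W' n', W n = W' n' ->
    (bsem (tauW W) c n <-> bsem (tauW W') c n')).
  { induction c; simpl; intros; unfold tauW in *; try tauto.
    - rewrite H; tauto.
    - specialize (IHc1 W n W' n' H); specialize (IHc2 W n W' n' H); tauto.
    - specialize (IHc1 W n W' n' H); specialize (IHc2 W n W' n' H); tauto.
    - specialize (IHc W n W' n' H); tauto. }
  intros. apply (H c W n W' n'); auto.
Qed.

Lemma mono : forall e W i r, G e W i r -> i <= r.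
Proof.
  unfold G; intros e W i r H; induction H; unfold sig in *; try lia.
  inversion H; lia.
Qed.

Lemma agree : forall e W i r, G e W i r -> forall W',
  (forall n, i <= n <= r -> W n = W' n) -> G e W' i r.
Proof.
  unfold G; intros e W i r H; induction H; intros W' Hag.
  - constructor. eapply bsem_ext; [|eauto]. apply Hag; lia.
  - constructor; auto.
  - pose proof (mono _ _ _ _ H); pose proof (mono _ _ _ _ H0).
    econstructor; [apply IHgsem1|apply IHgsem2]; intros; apply Hag; lia.
  - pose proof (mono _ _ _ _ H0).
    apply gsem_if_t; [eapply bsem_ext; [|eauto]; apply Hag; lia|].
    apply IHgsem; intros; apply Hag; lia.
  - pose proof (mono _ _ _ _ H0).
    apply gsem_if_f; [intro Hb; apply H; eapply bsem_ext; [|eauto]; symmetry; apply Hag; lia|].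
    apply IHgsem; intros; apply Hag; lia.
  - apply gsem_while_done. intro Hb; apply H; eapply bsem_ext; [|eauto]; symmetry; apply Hag; lia.
  - pose proof (mono _ _ _ _ H0); pose proof (mono _ _ _ _ H1).
    eapply gsem_while_step; [eapply bsem_ext; [|eauto]; apply Hag; lia| |].
    + apply IHgsem1; intros; apply Hag; lia.
    + apply IHgsem2; intros; apply Hag; lia.
Qed.

Lemma det : forall e W i r, G e W i r -> forall r', G e W i r' -> r = r'.
Proof.
  unfold G; intros e W i r H; induction H; intros r' H'; inversion H'; subst; auto;
    try tauto; try congruence;
  match goal with
  | Hm : gsem _ _ ?e ?s ?m', IH : forall r', gsem _ _ ?e ?s r' -> ?m = r' |- _ =>
      apply IH in Hm; subst; solve [eauto]
  end.
Qed.

Lemma while_final : forall x W i r, G x W i r -> forall c e, x = GWhile c e ->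
  ~ bsem (tauW W) c r.
Proof.
  unfold G; intros x W i r H; induction H; intros c0 e0 Heq; try discriminate.
  - injection Heq; intros; subst; auto.
  - eapply IHgsem2; eauto.
Qed.

Definition A (n : nat) := Nat.even n.
Definition Wm (m : nat) (n : nat) := A (Nat.min n (m - 1)).

Lemma Wm_lt : forall m n, n < m -> Wm m n = A n.
Proof. intros; unfold Wm; rewrite Nat.min_l; auto; lia. Qed.

Lemma Wm_eq : forall m, 1 <= m -> Wm m m = A (m - 1).
Proof. intros; unfold Wm; rewrite Nat.min_r; auto; lia. Qed.

Lemma A_S : forall n, A (S n) = negb (A n).
Proof. intros; unfold A; rewrite Nat.even_succ, <- Nat.negb_even; auto. Qed.

Lemma main : forall e i M, (forall m, M <= m -> G e (Wm m) i m) -> False.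
Proof.
  induction e; intros i M H.
  - pose proof (H M (le_n _)); pose proof (H (S M) (le_S _ _ (le_n _))).
    unfold G in *; inversion H0; inversion H1; subst; lia.
  - pose proof (H M (le_n _)); pose proof (H (S M) (le_S _ _ (le_n _))).
    unfold G, sig in *; inversion H0; inversion H1; subst.
    inversion H3; inversion H7; lia.
  - destruct (classic (exists k, G e1 A i k)) as [[k Hk]|Hn].
    + apply (IHe2 k (Nat.max M (S k))). intros m Hm.
      pose proof (H m ltac:(lia)) as Hs. unfold G in Hs; inversion Hs; subst.
      assert (G e1 (Wm m) i k).
      { eapply agree; [eauto|]. intros; rewrite Wm_lt; auto; lia. }
      match goal with Hx : gsem _ _ e1 i ?k' |- _ => pose proof (det _ _ _ _ H0 _ Hx); subst; auto end.
    + apply (IHe1 i M). intros m Hm.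
      pose proof (H m Hm) as Hs. unfold G in Hs; inversion Hs; subst.
      match goal with Hx : gsem _ _ e1 i ?m0, Hy : gsem _ _ e2 ?m0 m |- _ =>
      pose proof (mono _ _ _ _ Hy);
      destruct (Nat.eq_dec m0 m); [subst; unfold G; assumption|];
      exfalso; apply Hn; exists m0; eapply agree; [exact Hx|];
      intros; rewrite Wm_lt; auto; lia end.
  - destruct (classic (bsem (tauW A) b i)) as [Hb|Hb].
    + apply (IHe1 i (Nat.max M (S i))). intros m Hm.
      pose proof (H m ltac:(lia)) as Hs. unfold G in Hs; inversion Hs; subst; auto.
      match goal with Hx : ~ bsem _ b i |- _ => exfalso; apply Hx; eapply bsem_ext; [|eauto]; rewrite Wm_lt; auto; lia end.
    + apply (IHe2 i (Nat.max M (S i))). intros m Hm.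
      pose proof (H m ltac:(lia)) as Hs. unfold G in Hs; inversion Hs; subst; auto.
      match goal with Hx : bsem _ b i |- _ => exfalso; apply Hb; eapply bsem_ext; [|exact Hx]; rewrite Wm_lt; auto; lia end.
  - set (m0 := S M). set (m1 := S (S M)).
    pose proof (H m0 ltac:(unfold m0; lia)) as H0.
    pose proof (H m1 ltac:(unfold m1; lia)) as H1.
    pose proof (while_final _ _ _ _ H0 _ _ eq_refl) as F0.
    pose proof (while_final _ _ _ _ H1 _ _ eq_refl) as F1.
    assert (E0 : Wm m0 m0 = A M) by (rewrite Wm_eq; unfold m0; [f_equal; lia|lia]).
    assert (E1 : Wm m1 m1 = negb (A M)) by (rewrite Wm_eq; unfold m1; [|lia];
      replace (S (S M) - 1) with (S M) by lia; apply A_S).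
    assert (Hc : forall W n, ~ bsem (tauW W) b n).
    { intros W n Hb. destruct (Bool.bool_dec (W n) (A M)) as [e'|e'].
      - apply F0; eapply bsem_ext; [|eauto]; congruence.
      - apply F1; eapply bsem_ext; [|eauto]. rewrite E1. destruct (W n), (A M); simpl in *; congruence. }
    unfold G in H0, H1; inversion H0; subst; [|exfalso; eapply Hc; eauto].
    inversion H1; subst; [unfold m0, m1 in *; lia|exfalso; eapply Hc; eauto].
Qed.

Lemma Frel_ok : forall (t : T) (p : Sigma) m d k, k + 1 + d = m ->
  (A k = true -> Frel_v (tauW (Wm m)) sig t p (S k) m) /\
  (A k = false -> Frel_u (tauW (Wm m)) sig t p (S k) m).
Proof.
  intros t p m d; induction d; intros k Hk.
  - assert (Wm m (S k) = A k) by (unfold Wm; rewrite Nat.min_r; [f_equal|]; lia).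
    assert (Em : m = S k) by lia. rewrite Em in H |- *.
    split; intros HA.
    + apply Fv_in. unfold tauW; congruence.
    + apply Fu_out. unfold tauW; congruence.
  - assert (Wm m (S k) = negb (A k)) by (rewrite Wm_lt; [apply A_S|lia]).
    destruct (IHd (S k) ltac:(lia)) as [IHv IHu]. rewrite A_S in IHv, IHu.
    split; intros HA; rewrite HA in *; simpl in *.
    + eapply Fv_out; [unfold tauW; congruence|reflexivity|auto].
    + eapply Fu_in; [unfold tauW; congruence|reflexivity|auto].
Qed.

End Proof.

Theorem theorem2p4 (Sigma T : Type) (t : T) (p : Sigma) :
  ~ exists e : GExp Sigma T,
      forall (S : Type) (tau : T -> S -> Prop) (sigma : Sigma -> S -> option S)
             (s r : S),
        gsem tau sigma e s r <-> Fsem tau sigma t p s r.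
Proof.
  intros [e He]. apply (main Sigma T e 0 1). intros m Hm.
  unfold G. apply (proj2 (He nat (tauW T (Wm m)) (sig Sigma) 0 m)). split.
  - intros _. exists 1. split; [reflexivity|].
    apply (Frel_ok Sigma T t p m (m - 1) 0 ltac:(lia)). reflexivity.
  - intros Hn. exfalso. apply Hn. unfold tauW, Wm. rewrite Nat.min_l; [reflexivity|lia].
Qed.
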